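(* Let $\Lambda$ be a left-artinian ring, $\mathcal{C}=\mathrm{mod}(\Lambda)$, and let $\alpha,\beta$ be pre-radicals on $\mathcal{C}$ such that $\alpha^2=\alpha$ and $q_\beta$ preserves monomorphisms. Then $\ell\ell^\alpha(M)\leq\ell\ell_{q_\beta}(M)$ for every $M\in\mathcal{C}$ if and only if $\mathcal{T}_\beta\subseteq\mathcal{F}_\alpha$.
   Context: $\mathcal{C}$ is the category of finitely generated left $\Lambda$-modules; $\mathrm{rad}$, $\mathrm{soc}$ are the radical and socle functors. A pre-radical is an additive subfunctor $\alpha$ of the identity; $q_\alpha:=\mathrm{Id}/\alpha$. $\mathcal{F}_\alpha=\{M:\alpha(M)=0\}$, $\mathcal{T}_\alpha=\{M:\alpha(M)=M\}$. For an additive functor $\gamma$, $F_\gamma=\mathrm{rad}\circ\gamma$, $G_\gamma=\gamma/(\mathrm{soc}\circ\gamma)$, $\ell\ell^\gamma(M)=\min\{i\geq0:\gamma\circ F_\gamma^{\,i}(M)=0\}$ and $\ell\ell_\gamma(M)=\min\{i\geq0:\gamma\circ G_\gamma^{\,i}(M)=0\}$ (with $\min\emptyset=\infty$). *)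

(* Defs.v *)
From HB Require Import structures.
From mathcomp Require Import all_boot all_algebra.
From mathcomp Require Import boolp.

Set Implicit Arguments.
Unset Strict Implicit.
Unset Printing Implicit Defensive.

Import GRing.Theory.
Local Open Scope ring_scope.
Local Open Scope quotient_scope.

Section Submodules.
Variable R : pzRingType.

Definition is_submod (M : lmodType R) (S : pred M) : Prop :=
  [/\ S 0, (forall x y, S x -> S y -> S (x + y)) & (forall (a : R) x, S x -> S (a *: x))].

Definition genmod (M : lmodType R) (S : pred M) : pred M :=
  fun x => `[< forall T : pred M, is_submod T -> (forall y, S y -> T y) -> T x >].

Lemma genmod_submod (M : lmodType R) (S : pred M) : is_submod (genmod S).
Proof.
split.
- by apply/asboolP => T [T0 _ _] _.
- move=> x y /asboolP Hx /asboolP Hy; apply/asboolP => T HT ST.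
  by case: (HT) => _ TD _; apply: TD; [apply: Hx | apply: Hy].
- move=> a x /asboolP Hx; apply/asboolP => T HT ST.
  by case: (HT) => _ _ TZ; apply: TZ; apply: Hx.
Qed.

Lemma genmod_id (M : lmodType R) (S : pred M) x : S x -> genmod S x.
Proof. by move=> Sx; apply/asboolP => T _ ST; apply: ST. Qed.

Lemma genmodN (M : lmodType R) (S : pred M) x : genmod S x -> genmod S (- x).
Proof.
case: (genmod_submod S) => _ _ GZ Gx.
by rewrite -scaleN1r; apply: GZ.
Qed.

Section SubModule.
Variables (M : lmodType R) (S : pred M).
Let G := genmod S.

Definition subT := {x : M | G x}.
HB.instance Definition _ := Choice.copy subT {x : M | G x}.

Lemma subT_inj (u v : subT) : sval u = sval v -> u = v.
Proof.
case: u => x Hx; case: v => y Hy /= exy; subst y.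
by rewrite (bool_irrelevance Hx Hy).
Qed.

Definition sub0 : subT := exist _ 0 (let: And3 h _ _ := genmod_submod S in h).
Definition subadd (u v : subT) : subT :=
  exist _ (sval u + sval v)
    (let: And3 _ h _ := genmod_submod S in h _ _ (svalP u) (svalP v)).
Definition subopp (u : subT) : subT := exist _ (- sval u) (genmodN (svalP u)).
Definition subscale (a : R) (u : subT) : subT :=
  exist _ (a *: sval u) (let: And3 _ _ h := genmod_submod S in h a _ (svalP u)).

Lemma subaddA : associative subadd.
Proof. by move=> u v w; apply: subT_inj; rewrite /= addrA. Qed.
Lemma subaddC : commutative subadd.
Proof. by move=> u v; apply: subT_inj; rewrite /= addrC. Qed.
Lemma subadd0 : left_id sub0 subadd.
Proof. by move=> u; apply: subT_inj; rewrite /= add0r. Qed.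
Lemma subaddN : left_inverse sub0 subopp subadd.
Proof. by move=> u; apply: subT_inj; rewrite /= addNr. Qed.

HB.instance Definition _ := GRing.isZmodule.Build subT subaddA subaddC subadd0 subaddN.

Lemma subscaleA a b (u : subT) : subscale a (subscale b u) = subscale (a * b) u.
Proof. by apply: subT_inj; rewrite /= scalerA. Qed.
Lemma subscale1 : left_id 1 subscale.
Proof. by move=> u; apply: subT_inj; rewrite /= scale1r. Qed.
Lemma subscaleDr : right_distributive subscale +%R.
Proof. by move=> a u v; apply: subT_inj; rewrite /= scalerDr. Qed.
Lemma subscaleDl (u : subT) : {morph subscale^~ u : a b / a + b}.
Proof. by move=> a b; apply: subT_inj; rewrite /= scalerDl. Qed.

HB.instance Definition _ :=
  GRing.Zmodule_isLmodule.Build R subT subscaleA subscale1 subscaleDr subscaleDl.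

End SubModule.

Section QuotModule.
Variables (M : lmodType R) (S : pred M).
Let G := genmod S.

Definition qrel : rel M := fun x y => G (x - y).

Lemma qrel_refl : reflexive qrel.
Proof. by move=> x; rewrite /qrel subrr; case: (genmod_submod S). Qed.
Lemma qrel_sym : symmetric qrel.
Proof.
move=> x y; apply/idP/idP => H; by rewrite /qrel -opprB; apply: genmodN.
Qed.
Lemma qrel_trans : transitive qrel.
Proof.
move=> y x z Hxy Hyz; rewrite /qrel.
have -> : x - z = (x - y) + (y - z) by rewrite addrA subrK.
by case: (genmod_submod S) => _ GD _; apply: GD.
Qed.

Canonical qrel_equiv := EquivRel qrel qrel_refl qrel_sym qrel_trans.

Definition quotT := {eq_quot qrel_equiv}.
HB.instance Definition _ := Choice.copy quotT {eq_quot qrel_equiv}.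

Definition qpi (x : M) : quotT := \pi_{eq_quot qrel_equiv} x.
Definition qrepr (u : quotT) : M := repr (u : {eq_quot qrel_equiv}).

Lemma qreprK : cancel qrepr qpi.
Proof. exact: reprK. Qed.

Lemma qpiP x y : reflect (qpi x = qpi y) (G (x - y)).
Proof. exact: eqmodP. Qed.

Lemma qW (P : quotT -> Prop) : (forall x, P (qpi x)) -> forall u, P u.
Proof. by move=> H u; rewrite -(qreprK u); apply: H. Qed.

Lemma qrepr_pi x : G (qrepr (qpi x) - x).
Proof. by apply/qpiP; rewrite qreprK. Qed.

Definition q0 : quotT := qpi 0.
Definition qadd (u v : quotT) : quotT := qpi (qrepr u + qrepr v).
Definition qopp (u : quotT) : quotT := qpi (- qrepr u).
Definition qscale (a : R) (u : quotT) : quotT := qpi (a *: qrepr u).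

Lemma qaddE x y : qadd (qpi x) (qpi y) = qpi (x + y).
Proof.
apply/qpiP.
have -> : qrepr (qpi x) + qrepr (qpi y) - (x + y)
        = (qrepr (qpi x) - x) + (qrepr (qpi y) - y) by rewrite opprD addrACA.
by case: (genmod_submod S) => _ GD _; apply: GD; apply: qrepr_pi.
Qed.
Lemma qoppE x : qopp (qpi x) = qpi (- x).
Proof.
apply/qpiP; rewrite -opprD; apply: genmodN; exact: qrepr_pi.
Qed.
Lemma qscaleE a x : qscale a (qpi x) = qpi (a *: x).
Proof.
apply/qpiP; rewrite -scalerBr.
by case: (genmod_submod S) => _ _ GZ; apply: GZ; apply: qrepr_pi.
Qed.

Lemma qaddA : associative qadd.
Proof.
by elim/qW=> x; elim/qW=> y; elim/qW=> z; rewrite !qaddE addrA.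
Qed.
Lemma qaddC : commutative qadd.
Proof. by elim/qW=> x; elim/qW=> y; rewrite !qaddE addrC. Qed.
Lemma qadd0 : left_id q0 qadd.
Proof. by elim/qW=> x; rewrite /q0 qaddE add0r. Qed.
Lemma qaddN : left_inverse q0 qopp qadd.
Proof. by elim/qW=> x; rewrite qoppE qaddE addNr. Qed.

HB.instance Definition _ := GRing.isZmodule.Build quotT qaddA qaddC qadd0 qaddN.

Lemma qscaleA a b (u : quotT) : qscale a (qscale b u) = qscale (a * b) u.
Proof. by elim/qW: u => x; rewrite !qscaleE scalerA. Qed.
Lemma qscale1 : left_id 1 qscale.
Proof. by elim/qW=> x; rewrite qscaleE scale1r. Qed.
Lemma qscaleDr : right_distributive qscale +%R.
Proof.
move=> a; elim/qW=> x; elim/qW=> y.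
by rewrite [qpi x + _]qaddE !qscaleE scalerDr -qaddE.
Qed.
Lemma qscaleDl (u : quotT) : {morph qscale^~ u : a b / a + b}.
Proof.
by move=> a b; elim/qW: u => x; rewrite !qscaleE scalerDl -qaddE.
Qed.

HB.instance Definition _ :=
  GRing.Zmodule_isLmodule.Build R quotT qscaleA qscale1 qscaleDr qscaleDl.

End QuotModule.

End Submodules.

(* Modules as objects: M ranges over lmodType R; mod(Lambda) = the f.g. ones *)

Section Preradicals.
Variable R : pzRingType.

Definition subL (M : lmodType R) (S : pred M) : lmodType R := subT S.
Definition quotL (M : lmodType R) (S : pred M) : lmodType R := quotT S.

Definition fg (M : lmodType R) : Prop :=
  exists s : seq M, forall x : M,
    exists c : 'I_(size s) -> R, x = \sum_(i < size s) c i *: s`_i.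

(* left-artinian ring: DCC on left ideals (= submodules of the regular
   left module R^o) *)
Definition left_artinian : Prop :=
  forall I : nat -> pred R^o,
    (forall n, is_submod (I n)) ->
    (forall n x, I n.+1 x -> I n x) ->
    exists n, forall m, (n <= m)%N -> forall x, I m x = I n x.

(* A pre-radical on C = mod(R): a subfunctor of the identity of C.  Its
   action on a morphism f is the restriction of f (so additivity is
   automatic). *)
Definition preradical (a : forall M : lmodType R, pred M) : Prop :=
  (forall M : lmodType R, fg M -> is_submod (a M)) /\
  (forall M N : lmodType R, fg M -> fg N ->
     forall (f : {linear M -> N}) (x : M), a M x -> a N (f x)).

(* alpha^2 = alpha : alpha(alpha(M)) = alpha(M) for all M in C *)
Definition pr_idempotent (a : forall M : lmodType R, pred M) : Prop :=
  forall M : lmodType R, fg M ->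
    forall x : subL (a M), a (subL (a M)) x.

Definition qobj (b : forall M : lmodType R, pred M) (M : lmodType R) :
  lmodType R := quotL (b M).
Definition qmap (b : forall M : lmodType R, pred M) (M N : lmodType R)
  (f : {linear M -> N}) : qobj b M -> qobj b N :=
  fun u => qpi (b N) (f (qrepr u)).
Arguments qmap b {M N} f.

Definition q_preserves_mono (b : forall M : lmodType R, pred M) : Prop :=
  forall M N : lmodType R, fg M -> fg N ->
    forall f : {linear M -> N}, injective f -> injective (qmap b f).

Definition maximal_sub (M : lmodType R) (N : pred M) : Prop :=
  [/\ is_submod N, (exists x, ~~ N x) &
      forall N' : pred M, is_submod N' -> (forall x, N x -> N' x) ->
        (exists x, ~~ N' x) -> forall x, N' x -> N x].
Definition rad (M : lmodType R) : pred M :=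
  fun x => `[< forall N : pred M, maximal_sub N -> N x >].
Arguments rad : clear implicits.

Definition simple_sub (M : lmodType R) (N : pred M) : Prop :=
  [/\ is_submod N, (exists x, N x /\ x != 0) &
      forall N' : pred M, is_submod N' -> (forall x, N' x -> N x) ->
        (forall x, N' x -> x = 0) \/ (forall x, N x -> N' x)].
Definition soc (M : lmodType R) : pred M :=
  genmod (fun x => `[< exists N : pred M, simple_sub N /\ N x >]).
Arguments soc : clear implicits.

Definition Fobj (a : forall M : lmodType R, pred M) (M : lmodType R) :
  lmodType R := subL (rad (subL (a M))).
Definition Gobj (b : forall M : lmodType R, pred M) (M : lmodType R) :
  lmodType R := quotL (soc (qobj b M)).

(* N u {oo} : None stands for infinity *)
Definition natinf := option nat.
Definition leinf (m n : natinf) : Prop :=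
  match n with
  | None => True
  | Some n' => match m with Some m' => (m' <= n')%N | None => False end
  end.

Lemma ex_asbool_nat (P : nat -> Prop) :
  (exists n, P n) -> exists n, (fun k => `[< P k >]) n.
Proof. by case=> n Pn; exists n; apply/asboolP. Qed.

Definition natinf_min (P : nat -> Prop) : natinf :=
  match pselect (exists n, P n) with
  | left h => Some (ex_minn (ex_asbool_nat h))
  | right _ => None
  end.

Definition ll_up (a : forall M : lmodType R, pred M) (M : lmodType R) : natinf :=
  natinf_min (fun i => forall x, a (iter i (Fobj a) M) x -> x = 0).

Definition ll_low_q (b : forall M : lmodType R, pred M) (M : lmodType R) : natinf :=
  natinf_min (fun i => forall u : qobj b (iter i (Gobj b) M), u = 0).

Definition in_T (b : forall M : lmodType R, pred M) (M : lmodType R) : Prop :=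
  fg M /\ forall x : M, b M x.
Definition in_F (a : forall M : lmodType R, pred M) (M : lmodType R) : Prop :=
  fg M /\ forall x : M, a M x -> x = 0.

End Preradicals.

(* Main.v *)
Require Import Defs.
From HB Require Import structures.
From mathcomp Require Import all_boot all_algebra.
From mathcomp Require Import boolp classical_sets.
Set Implicit Arguments. Unset Strict Implicit. Unset Printing Implicit Defensive.
Import GRing.Theory.
Local Open Scope ring_scope.

Section Base.
Variable R : pzRingType.

Definition mkLin (M N : lmodType R) (f : M -> N) (H : linear f) : {linear M -> N} :=
  HB.pack f (GRing.isLinear.Build R M N *:%R f H).
Lemma mkLinE (M N : lmodType R) (f : M -> N) (H : linear f) x : mkLin H x = f x.
Proof. by []. Qed.

Definition incl (T : Type) (A B : pred T) := forall x, A x -> B x.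

Section SM.
Variables (M : lmodType R) (S : pred M).
Hypothesis HS : is_submod S.
Lemma sm0 : S 0. Proof. by case: HS. Qed.
Lemma smD x y : S x -> S y -> S (x + y). Proof. by case: HS => _ h _; apply: h. Qed.
Lemma smZ a x : S x -> S (a *: x). Proof. by case: HS => _ _ h; apply: h. Qed.
Lemma smN x : S x -> S (- x). Proof. by move=> Sx; rewrite -scaleN1r; apply: smZ. Qed.
Lemma smB x y : S x -> S y -> S (x - y). Proof. by move=> ? ?; apply: smD => //; apply: smN. Qed.
Lemma smBr x y : S (x - y) -> S y -> S x.
Proof. by move=> h1 h2; have := smD h1 h2; rewrite subrK. Qed.
Lemma smBl x y : S (x - y) -> S x -> S y.
Proof. by move=> h1 h2; have := smB h2 h1; rewrite opprB addrC subrK. Qed.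
End SM.

Lemma genmod_min (M : lmodType R) (S T : pred M) :
  is_submod T -> incl S T -> incl (genmod S) T.
Proof. by move=> HT ST x /asboolP; apply. Qed.

Lemma genmodE (M : lmodType R) (S : pred M) x : is_submod S -> genmod S x = S x.
Proof.
move=> HS; apply/idP/idP; last exact: genmod_id.
by apply: genmod_min.
Qed.

Section ZornSec.
Local Open Scope classical_set_scope.
Lemma zorn_pred (X : lmodType R) (Phi : pred X -> Prop) (Q0 : pred X) :
  Phi Q0 ->
  (forall C : pred X -> Prop, (exists Q, C Q) -> (forall Q, C Q -> Phi Q) ->
     (forall Q1 Q2, C Q1 -> C Q2 -> (forall x, Q1 x -> Q2 x) \/ (forall x, Q2 x -> Q1 x)) ->
     Phi (fun x => `[< exists Q, C Q /\ Q x >])) ->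
  exists Q, [/\ Phi Q, (forall x, Q0 x -> Q x) &
     forall Q', Phi Q' -> (forall x, Q x -> Q' x) -> forall x, Q' x -> Q x].
Proof.
move=> P0 Hch.
pose P := fun A : set X => A = set0 \/
   exists Q, [/\ Phi Q, (forall x, Q0 x -> Q x) & A = [set x | Q x]].
have [|A [PA Amax]] := @Zorn_bigcup X P.
  move=> F FP Ftot.
  case: (pselect (exists B, F B /\ B != set0)) => [[B [FB /set0P [b Bb]]]|nB]; last first.
    left; apply/seteqP; split => // x [B FB Bx]; exfalso; apply: nB; exists B.
    by split => //; apply/set0P; exists x.
  right.
  pose C := fun Q : pred X => [/\ Phi Q, (forall x, Q0 x -> Q x) & F [set x | Q x]].
  have CB : exists Q, C Q.
    case: (FP _ FB) => [B0|[Q [PQ Q0Q eB]]]; first by rewrite B0 in Bb.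
    by exists Q; split => //; rewrite -eB.
  exists (fun x => `[< exists Q, C Q /\ Q x >]); split.
  - apply: Hch => //; first by move=> Q [].
    move=> Q1 Q2 [_ _ F1] [_ _ F2].
    by case: (Ftot _ _ F1 F2) => h; [left|right] => x hx; apply: h.
  - case: CB => Q [PQ Q0Q FQ] x Q0x; apply/asboolP; exists Q; split => //.
    by apply: Q0Q.
  - apply/seteqP; split => x.
      move=> [B' FB' B'x]; apply/asboolP.
      case: (FP _ FB') => [B0|[Q [PQ Q0Q eB]]]; first by rewrite B0 in B'x.
      by exists Q; split; [split => //; rewrite -eB | rewrite eB in B'x].
    by move=> /= /asboolP [Q [[_ _ FQ] Qx]]; exists [set x | Q x].
case: PA => [A0|[Q [PQ Q0Q eA]]].
  have Q0e : forall x, Q0 x = false.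
    move=> x; apply/negP => Q0x.
    apply: (Amax [set x | Q0 x]).
      by rewrite A0; split => [y //|/(_ x Q0x) //].
    by right; exists Q0; split.
  have eQ0 : Q0 = (fun _ => false) by apply: funext => x; rewrite Q0e.
  exists Q0; split => // Q' PQ' _ x Q'x; exfalso.
  apply: (Amax [set x | Q' x]).
    by rewrite A0; split => [y //|/(_ x Q'x) //].
  by right; exists Q'; split => // y; rewrite Q0e.
exists Q; split => // Q' PQ' QQ' x Q'x.
apply/negPn/negP => nQx.
apply: (Amax [set x | Q' x]).
  rewrite eA; split; first by move=> y; apply: QQ'.
  by move=> /(_ x Q'x) /= Qx; rewrite Qx in nQx.
by right; exists Q'; split => // y /Q0Q /QQ'.
Qed.
End ZornSec.

End Base.

Section P2.
Variable R : pzRingType.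

Lemma soc_submod (N : lmodType R) : is_submod (@soc R N).
Proof. exact: genmod_submod. Qed.

Definition plusR (N : lmodType R) (Q : pred N) (v : N) : pred N :=
  fun w => `[< exists q r, Q q /\ w = q + r *: v >].

Lemma plusR_submod (N : lmodType R) (Q : pred N) v : is_submod Q -> is_submod (plusR Q v).
Proof.
move=> HQ; split.
- by apply/asboolP; exists 0, 0; rewrite scale0r addr0; split => //; apply: sm0.
- move=> a b /asboolP [q1 [r1 [Q1 ->]]] /asboolP [q2 [r2 [Q2 ->]]].
  apply/asboolP; exists (q1 + q2), (r1 + r2); split; first exact: smD.
  by rewrite scalerDl addrACA.
- move=> c a /asboolP [q1 [r1 [Q1 ->]]]; apply/asboolP; exists (c *: q1), (c * r1).
  by split; [apply: smZ | rewrite scalerDr scalerA].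
Qed.

Lemma plusR_l (N : lmodType R) (Q : pred N) v q : Q q -> plusR Q v q.
Proof. by move=> Qq; apply/asboolP; exists q, 0; rewrite scale0r addr0. Qed.
Lemma plusR_r (N : lmodType R) (Q : pred N) v : is_submod Q -> plusR Q v v.
Proof. by move=> HQ; apply/asboolP; exists 0, 1; rewrite scale1r add0r; split => //; apply: sm0. Qed.

Lemma zl (V : zmodType) (u v a b : V) : u + (v + a) - (b + a) = u + v - b.
Proof. by rewrite addrA (addrC b) opprD addrA addrK. Qed.

Lemma rad_soc (A N : lmodType R) (h : {linear A -> N}) :
  (forall a, @soc R N (h a)) -> forall x, @Defs.rad R A x -> h x = 0.
Proof.
move=> hsoc x radx; apply/eqP/negPn/negP => ny.
set y := h x in ny.
pose Phi := fun Q : pred N => [/\ is_submod Q, incl Q (@soc R N) & ~~ Q y].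
have SS := soc_submod N.
have [Q [[HQ QS Qy] _ Qmax]] : exists Q, [/\ Phi Q, (forall v, (v == 0) -> Q v) &
     forall Q', Phi Q' -> (forall v, Q v -> Q' v) -> forall v, Q' v -> Q v].
  apply: zorn_pred.
  - split; last by [].
    + split => //; first by move=> a b /eqP -> /eqP ->; rewrite addr0.
      by move=> a b /eqP ->; rewrite scaler0.
    + by move=> v /eqP ->; apply: sm0.
  - move=> C [Q1 CQ1] CPhi Ctot; split.
    + split.
      * apply/asboolP; exists Q1; split => //; case: (CPhi _ CQ1) => H _ _; exact: sm0 H.
      * move=> a b /asboolP [Qa [CQa Qaa]] /asboolP [Qb [CQb Qbb]].
        case: (Ctot _ _ CQa CQb) => hh.
          apply/asboolP; exists Qb; split => //; case: (CPhi _ CQb) => H _ _.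
          by apply: smD H _ _ (hh _ Qaa) Qbb.
        apply/asboolP; exists Qa; split => //; case: (CPhi _ CQa) => H _ _.
        by apply: smD H _ _ Qaa (hh _ Qbb).
      * move=> r a /asboolP [Qa [CQa Qaa]]; apply/asboolP; exists Qa; split => //.
        by case: (CPhi _ CQa) => H _ _; apply: smZ.
    + by move=> v /asboolP [Qa [CQa Qaa]]; case: (CPhi _ CQa) => _ H _; apply: H.
    + by apply/negP => /asboolP [Qa [CQa Qaa]]; case: (CPhi _ CQa) => _ _ /negP.
have hi : forall v, @soc R N v -> ~~ Q v -> plusR Q v y.
  move=> v Sv nQv; apply/negPn/negP => nP.
  have hPhi : Phi (plusR Q v).
    split; [exact: plusR_submod | | exact: nP].
    move=> w /asboolP [q [r [Qq ->]]]; apply: smD => //; first by apply: QS.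
    by apply: smZ.
  have := Qmax _ hPhi (fun w => @plusR_l _ _ v w) v (plusR_r v HQ).
  by move=> Qv; rewrite Qv in nQv.
have hii : forall v, @soc R N v -> plusR Q y v.
  apply: genmod_min; first exact: plusR_submod.
  move=> w /asboolP [K [Ksim Kw]]; case: (Ksim) => HK [k0 [Kk0 nk0]] Ksimp.
  case: (Ksimp (predI K Q)).
  - split.
    + by rewrite /= (sm0 HK) (sm0 HQ).
    + by move=> a b /andP [Ka Qa] /andP [Kb Qb]; rewrite /= (smD HK) ?(smD HQ).
    + by move=> a b /andP [Ka Qa]; rewrite /= (smZ HK) ?(smZ HQ).
  - by move=> z /andP [].
  - move=> K0.
    have KS : forall z, K z -> @soc R N z.
      by move=> z Kz; apply: genmod_id => /=; apply/asboolP; exists K; split.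
    pose QK := fun z => `[< exists q k, Q q /\ K k /\ z = q + k >].
    have HQK : is_submod QK.
      split.
      + by apply/asboolP; exists 0, 0; rewrite addr0; split; [apply: sm0 | split => //; apply: sm0].
      + move=> a b /asboolP [q1 [k1 [Q1 [K1 ->]]]] /asboolP [q2 [k2 [Q2 [K2 ->]]]].
        apply/asboolP; exists (q1 + q2), (k1 + k2).
        by rewrite addrACA; split; [apply: smD | split => //; apply: smD].
      + move=> r a /asboolP [q1 [k1 [Q1 [K1 ->]]]]; apply/asboolP.
        by exists (r *: q1), (r *: k1); rewrite scalerDr; split; [apply: smZ|split => //; apply: smZ].
    have QKy : QK y.
      apply/negPn/negP => nQK.
      have : forall z, QK z -> Q z.
        apply: Qmax.
        - split => //; move=> z /asboolP [q [k [Qq [Kk ->]]]]; apply: smD => //.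
          + by apply: QS.
          + by apply: KS.
        - by move=> z Qz; apply/asboolP; exists z, 0; rewrite addr0; split => //; split => //; apply: sm0.
      move=> QKQ.
      have Qk0 : Q k0.
        by apply: QKQ; apply/asboolP; exists 0, k0; rewrite add0r; split => //; apply: sm0.
      have : k0 = 0 by apply: K0; rewrite /= Kk0 Qk0.
      by move/eqP; rewrite (negbTE nk0).
    case/asboolP: QKy => q [k [Qq [Kk ey]]].
    have nk : k != 0 by apply/eqP => k0'; move: Qy; rewrite ey k0' addr0 Qq.
    case: (Ksimp (fun z => `[< exists r, z = r *: k >])).
    + split.
      * by apply/asboolP; exists 0; rewrite scale0r.
      * by move=> a b /asboolP [r1 ->] /asboolP [r2 ->]; apply/asboolP; exists (r1 + r2); rewrite scalerDl.
      * by move=> c a /asboolP [r1 ->]; apply/asboolP; exists (c * r1); rewrite scalerA.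
    + by move=> z /asboolP [r ->]; apply: smZ.
    + move=> /(_ k) hk; have : k = 0 by apply: hk; apply/asboolP; exists 1; rewrite scale1r.
      by move/eqP; rewrite (negbTE nk).
    + move=> /(_ w Kw) /asboolP [r ->]; apply/asboolP; exists (- (r *: q)), r.
      split; first by apply: smN => //; apply: smZ.
      have -> : k = y - q by rewrite ey addrC addKr.
      by rewrite scalerBr addrC.
  - by move=> /(_ w Kw) /andP [_ Qw]; apply: plusR_l.
(* the maximal submodule of A *)
pose P := fun a : A => Q (h a).
have HP : is_submod P.
  split; rewrite /P.
  - by rewrite linear0; apply: sm0.
  - by move=> a b Pa Pb; rewrite linearD; apply: smD.
  - by move=> r a Pa; rewrite linearZ; apply: smZ.
have mP : maximal_sub P.
  split => //; first by exists x.
  move=> N' HN' PN' [v nN'v] w N'w; apply/negPn/negP => nPw.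
  apply/negP: nN'v.
  case/asboolP: (hii _ (hsoc w)) => q [r [Qq ehw]].
  have nQry : ~~ Q (r *: y).
    by apply/negP => Qry; move: nPw; rewrite /P ehw (smD HQ).
  have Sry : @soc R N (r *: y) by apply: smZ => //; apply: hsoc.
  case/asboolP: (hi _ Sry nQry) => q1 [s [Qq1 ey]].
  case/asboolP: (hii _ (hsoc v)) => q2 [t [Qq2 ehv]].
  have : P (v - (t * s) *: w).
    rewrite /P linearB linearZ /= ehv ehw.
    have -> : q2 + t *: y - (t * s) *: (q + r *: y) = q2 + t *: q1 - (t * s) *: q.
      rewrite {1}ey !scalerDr !scalerA ?mulrA; exact: zl.
    by apply: smB => //; [apply: smD => //; apply: smZ | apply: smZ].
  move=> /PN' hh; rewrite negbK; apply: (smBr HN' hh); exact: smZ.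
move: radx => /asboolP /(_ P mP); rewrite /P => Qhx.
by rewrite Qhx in Qy.
Qed.

End P2.

Section P3.
Variable R : pzRingType.

Fixpoint lspan (M : lmodType R) (s : seq M) : pred M :=
  match s with
  | [::] => fun x => x == 0
  | m :: s' => fun x => `[< exists r y, lspan s' y /\ x = r *: m + y >]
  end.

Lemma lspan_sum (M : lmodType R) (s : seq M) x :
  (exists c : 'I_(size s) -> R, x = \sum_(i < size s) c i *: s`_i) <-> lspan s x.
Proof.
elim: s x => [|m s IH] x /=.
  split; first by case=> c ->; rewrite big_ord0.
  by move/eqP => ->; exists (fun _ => 0); rewrite big_ord0.
split.
  case=> c ->; rewrite big_ord_recl /=; apply/asboolP.
  exists (c ord0), (\sum_(i < size s) c (lift ord0 i) *: s`_i); split => //.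
  by apply/IH; exists (fun i => c (lift ord0 i)).
case/asboolP => r [y [/IH [c ->] ->]].
exists (fun i : 'I_(size s).+1 => match unlift ord0 i with None => r | Some j => c j end).
by rewrite big_ord_recl /= unlift_none; congr (_ + _); apply: eq_bigr => i _; rewrite liftK.
Qed.

Lemma fgE (M : lmodType R) : fg M <-> exists s : seq M, forall x, lspan s x.
Proof.
split; case=> s Hs; exists s => x; first by apply/lspan_sum.
by apply/lspan_sum.
Qed.

Lemma lspan_map (M N : lmodType R) (f : {linear M -> N}) (s : seq M) x :
  lspan s x -> lspan (map f s) (f x).
Proof.
elim: s x => [|m s IH] x /=; first by move/eqP ->; rewrite linear0.
case/asboolP => r [y [Hy ->]]; apply/asboolP; exists r, (f y); split; first exact: IH.
by rewrite linearD linearZ.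
Qed.

Lemma fg_surj (M N : lmodType R) (f : {linear M -> N}) :
  (forall y, exists x, y = f x) -> fg M -> fg N.
Proof.
move=> fs /fgE [s Hs]; apply/fgE; exists (map f s) => y.
by case: (fs y) => x ->; apply: lspan_map.
Qed.

Lemma qpi_lin (M : lmodType R) (S : pred M) : linear (qpi S).
Proof. by move=> a x y; rewrite -qaddE -qscaleE. Qed.
Definition qpiL (M : lmodType R) (S : pred M) : {linear M -> quotL S} := mkLin (@qpi_lin _ S).

Lemma fg_quot (M : lmodType R) (S : pred M) : fg M -> fg (quotL S).
Proof.
apply: (fg_surj (f := qpiL S)) => u; exists (qrepr u); by rewrite mkLinE qreprK.
Qed.

Lemma sval_lin (M : lmodType R) (S : pred M) : linear (fun u : subL S => sval u).
Proof. by []. Qed.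
Definition svalL (M : lmodType R) (S : pred M) : {linear subL S -> M} := mkLin (@sval_lin _ S).

Lemma rad_submod (A : lmodType R) : is_submod (@Defs.rad R A).
Proof.
split.
- by apply/asboolP => Q [HQ _ _]; apply: sm0.
- by move=> x y /asboolP hx /asboolP hy; apply/asboolP => Q mQ; case: (mQ) => HQ _ _; apply: (smD HQ); [exact: hx | exact: hy].
- by move=> a x /asboolP hx; apply/asboolP => Q mQ; case: (mQ) => HQ _ _; apply: (smZ HQ); exact: hx.
Qed.

Lemma natinf_min_le (P : nat -> Prop) n : P n -> exists2 m, natinf_min P = Some m & (m <= n)%N.
Proof.
move=> Pn; rewrite /natinf_min; case: pselect => [h|h]; last by exfalso; apply: h; exists n.
exists (ex_minn (ex_asbool_nat h)) => //.
by case: ex_minnP => m _; apply; apply/asboolP.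
Qed.

Lemma natinf_min_some (P : nat -> Prop) n : natinf_min P = Some n -> P n.
Proof.
rewrite /natinf_min; case: pselect => [h|//] [<-].
by case: ex_minnP => m /asboolP.
Qed.

Section Cores.
Variables (X Y : lmodType R) (f : {linear X -> Y}) (I : pred Y).
Hypothesis fI : forall x, genmod I (f x).
Definition cores (x : X) : subL I := exist _ (f x) (fI x).
Lemma cores_lin : linear cores.
Proof. by move=> a x y; apply: subT_inj; rewrite /= linearD linearZ. Qed.
Definition coresL : {linear X -> subL I} := mkLin cores_lin.
End Cores.

Hypothesis fg_sub : forall (M : lmodType R) (N : pred M), left_artinian R -> fg M -> is_submod N -> fg (subL N).

Section Main.
Unset Implicit Arguments.
Variables (alpha beta : forall M : lmodType R, pred M).
Set Implicit Arguments.
Hypotheses (HR : left_artinian R) (Ha : preradical alpha) (Hb : preradical beta)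
  (Hai : pr_idempotent alpha) (Hbm : q_preserves_mono beta).


Lemma qmap_pi (W Y : lmodType R) (f : {linear W -> Y}) :
  fg W -> fg Y -> forall v : W, @qmap R beta W Y f (qpi (beta W) v) = qpi (beta Y) (f v).
Proof.
move=> fW fY v; rewrite /qmap; apply/qpiP; rewrite -linearB; apply: genmod_id.
apply: (proj2 Hb _ _ fW fY).
by rewrite -(genmodE _ (proj1 Hb _ fW)); apply: qrepr_pi.
Qed.

Lemma hered (W Y : lmodType R) (f : {linear W -> Y}) :
  fg W -> fg Y -> injective f -> forall u, beta Y (f u) -> beta W u.
Proof.
move=> fW fY fi u bu.
have := Hbm fW fY fi (x1 := qpi (beta W) u) (x2 := qpi (beta W) 0).
rewrite !qmap_pi // linear0.
have -> : qpi (beta Y) (f u) = qpi (beta Y) 0 by apply/qpiP; rewrite subr0; apply: genmod_id.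
move=> /(_ erefl) /qpiP; rewrite subr0 genmodE //; exact: (proj1 Hb _ fW).
Qed.

Lemma inT_of_trivial (Y : lmodType R) : fg Y -> (forall u : qobj beta Y, u = 0) -> in_T beta Y.
Proof.
move=> fY Ht; split => // y.
have /qpiP : qpi (beta Y) y = qpi (beta Y) 0 by rewrite (Ht (qpi _ y)) (Ht (qpi _ 0)).
by rewrite subr0 genmodE //; exact: (proj1 Hb _ fY).
Qed.

Hypothesis HTF : forall M : lmodType R, in_T beta M -> in_F alpha M.

Lemma step (X Y : lmodType R) (f : {linear X -> Y}) : fg X -> fg Y ->
  (forall x, alpha X x -> qpi (@soc R (qobj beta Y)) (qpi (beta Y) (f x)) = 0) ->
  forall z : Fobj alpha X, alpha (Fobj alpha X) z -> f (sval (sval z)) = 0.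
Proof.
move=> fX fY Hf.
have HaX := proj1 Ha _ fX.
have HbY := proj1 Hb _ fY.
pose A := subL (alpha X).
have fA : fg A by apply: fg_sub.
have fZ : fg (Fobj alpha X) by apply: fg_sub => //; apply: rad_submod.
pose h0 := fun w : A => qpi (beta Y) (f (sval w)).
have h0lin : linear h0 by move=> a u v; rewrite /h0 /= linearD linearZ qpi_lin.
have ha : forall z : Fobj alpha X, beta Y (f (sval (sval z))).
  move=> z.
  have hz : @Defs.rad R A (sval z) by rewrite -(genmodE _ (rad_submod A)); exact: (svalP z).
  have hsoc : forall w, @soc R (qobj beta Y) (mkLin h0lin w).
    move=> w; rewrite mkLinE /h0.
    have /qpiP : qpi (@soc R (qobj beta Y)) (qpi (beta Y) (f (sval w))) = qpi _ 0.
      by rewrite Hf //; rewrite -(genmodE _ HaX); exact: (svalP w).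
    rewrite subr0 genmodE //; exact: soc_submod.
  have := @rad_soc R A (qobj beta Y) (mkLin h0lin) hsoc _ hz; rewrite mkLinE /h0 => e.
  rewrite -(genmodE _ HbY).
  have /qpiP : qpi (beta Y) (f (sval (sval z))) = qpi (beta Y) 0 := e.
  by rewrite subr0.
set Z := Fobj alpha X in fZ ha *.
have HaZ := proj1 Ha _ fZ.
pose I := fun y : Y => `[< exists z : Z, alpha Z z /\ y = f (sval (sval z)) >].
have HI : is_submod I.
  split.
  - by apply/asboolP; exists 0; split; [apply: sm0 | rewrite /= linear0].
  - move=> a b /asboolP [z1 [a1 ->]] /asboolP [z2 [a2 ->]]; apply/asboolP.
    by exists (z1 + z2); split; [apply: smD | rewrite /= linearD].
  - move=> c a /asboolP [z1 [a1 ->]]; apply/asboolP.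
    by exists (c *: z1); split; [apply: smZ | rewrite /= linearZ].
pose W := subL I.
have fW : fg W by apply: fg_sub.
have inTW : in_T beta W.
  split => // u; apply: (@hered W Y (svalL I)) => //.
    by move=> u1 u2; rewrite !mkLinE => /subT_inj.
  rewrite mkLinE; have := svalP u; rewrite genmodE // => /asboolP [z [_ ->]].
  exact: ha.
have [_ FW] := HTF inTW.
move=> z azz.
pose B := subL (alpha Z).
have fB : fg B by apply: fg_sub.
pose psi0 := fun w : B => f (sval (sval (sval w))).
have psi0lin : linear psi0 by move=> a u v; rewrite /psi0 /= linearD linearZ.
have psiI : forall w, genmod I (mkLin psi0lin w).
  move=> w; apply: genmod_id; apply/asboolP; exists (sval w); split => //.
  by rewrite -(genmodE _ HaZ); exact: (svalP w).
pose psi := coresL psiI.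
pose w0 : B := exist _ z (genmod_id azz).
have := proj2 Ha B W fB fW psi w0 (Hai fZ w0).
move/FW => /(congr1 sval) /=.
done.
Qed.


Fixpoint iotaF (M : lmodType R) (i : nat) : iter i (Fobj alpha) M -> M :=
  match i return iter i (Fobj alpha) M -> M with
  | 0 => id
  | i'.+1 => fun x => @iotaF M i' (sval (sval x))
  end.

Lemma iotaF_lin M i : linear (@iotaF M i).
Proof. by elim: i => [//|i IH] a x y /=; rewrite -IH. Qed.

Lemma iotaF_inj M i : injective (@iotaF M i).
Proof. by elim: i => [//|i IH] x y /= /IH /subT_inj /subT_inj. Qed.

Fixpoint piG (M : lmodType R) (j : nat) : M -> iter j (Gobj beta) M :=
  match j return M -> iter j (Gobj beta) M with
  | 0 => id
  | j'.+1 => fun x => qpi _ (qpi _ (@piG M j' x))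
  end.

Lemma piG_lin M j : linear (@piG M j).
Proof. by elim: j => [//|j IH] a x y /=; rewrite IH !qpi_lin. Qed.

Lemma fgF M i : fg M -> fg (iter i (Fobj alpha) M).
Proof.
move=> fM; elim: i => [//|i IH] /=.
apply: fg_sub => //; last exact: rad_submod.
by apply: fg_sub => //; apply: (proj1 Ha).
Qed.

Lemma fgG M j : fg M -> fg (iter j (Gobj beta) M).
Proof. by move=> fM; elim: j => [//|j IH] /=; apply: fg_quot; apply: fg_quot. Qed.

Lemma claim (M : lmodType R) (fM : fg M) n
  (Pn : forall u : qobj beta (iter n (Gobj beta) M), u = 0) :
  forall i j, (i + j = n)%N -> forall x : iter i (Fobj alpha) M,
    alpha _ x -> piG j (iotaF x) = 0.
Proof.
elim=> [|i IH] j eij x ax.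
  rewrite add0n in eij; subst j.
  have fGn := fgG n fM.
  have [_ FG] := HTF (inT_of_trivial fGn Pn).
  apply: FG; exact: (proj2 Ha _ _ fM fGn (mkLin (@piG_lin M n)) x ax).
have eij' : (i + j.+1 = n)%N by rewrite addnS -addSn.
have IHj := IH _ eij'.
pose fl := fun y : iter i (Fobj alpha) M => piG j (iotaF y).
have fllin : linear fl by move=> a u v; rewrite /fl iotaF_lin piG_lin.
exact: (@step _ _ (mkLin fllin) (fgF i fM) (fgG j fM) IHj x ax).
Qed.

End Main.

Theorem main_thm (alpha beta : forall M : lmodType R, pred M) :
  left_artinian R ->
  preradical alpha -> preradical beta ->
  pr_idempotent alpha -> q_preserves_mono beta ->
  ((forall M : lmodType R, fg M -> leinf (ll_up alpha M) (ll_low_q beta M)) <->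
   (forall M : lmodType R, in_T beta M -> in_F alpha M)).
Proof.
move=> HR Ha Hb Hai Hbm; split.
  move=> Hll M [fM bM]; split => //.
  have P0 : forall u : qobj beta (iter 0 (Gobj beta) M), u = 0.
    elim/qW => x; apply/qpiP; rewrite subr0; exact: genmod_id.
  have [m e] := @natinf_min_le (fun i => forall u : qobj beta (iter i (Gobj beta) M), u = 0) 0 P0; rewrite leqn0 => /eqP m0; subst m.
  move: (Hll M fM); rewrite /ll_low_q e.
  case e2 : (ll_up alpha M) => [m'|//]; rewrite /= leqn0 => /eqP m0; subst m'.
  by have := natinf_min_some e2.
move=> HTF M fM; rewrite /ll_low_q.
case e : (natinf_min _) => [n|//].
have Pn := natinf_min_some e.
have := @claim alpha beta HR Ha Hb Hai Hbm HTF M fM n Pn n 0 (addn0 n).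
move=> Hc.
have [m e2 le] : exists2 m, ll_up alpha M = Some m & (m <= n)%N.
  apply: natinf_min_le => x ax; apply: (@iotaF_inj alpha M n).
  have /= -> := Hc x ax.
  by have := linear0 (mkLin (@iotaF_lin alpha M n)); rewrite mkLinE => ->.
by rewrite e2.
Qed.
End P3.

Section P1a.
Variable R : pzRingType.

Lemma lspan_submod (M : lmodType R) (s : seq M) : is_submod (lspan s).
Proof.
elim: s => [|m s IH] /=.
  split => //; first by move=> x y /eqP -> /eqP ->; rewrite addr0.
  by move=> a x /eqP ->; rewrite scaler0.
split.
- by apply/asboolP; exists 0, 0; rewrite scale0r addr0; split => //; apply: sm0.
- move=> x y /asboolP [r1 [y1 [H1 ->]]] /asboolP [r2 [y2 [H2 ->]]].
  apply/asboolP; exists (r1 + r2), (y1 + y2); split; first exact: smD.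
  by rewrite scalerDl addrACA.
- move=> a x /asboolP [r1 [y1 [H1 ->]]]; apply/asboolP; exists (a * r1), (a *: y1).
  by split; [apply: smZ | rewrite scalerDr scalerA].
Qed.

Lemma lspan_in (M : lmodType R) (N : pred M) (s : seq M) :
  is_submod N -> all N s -> incl (lspan s) N.
Proof.
move=> HN; elim: s => [|m s IH] /=; first by move=> _ x /eqP ->; apply: sm0.
case/andP => Nm Ns x /asboolP [r [y [Hy ->]]]; apply: smD => //; first exact: smZ.
exact: IH.
Qed.

Lemma lspan_cat (M : lmodType R) (s t : seq M) x y :
  lspan s x -> lspan t y -> lspan (s ++ t) (x + y).
Proof.
elim: s x => [|m s IH] x /=; first by move/eqP ->; rewrite add0r.
case/asboolP => r [z [Hz ->]] Hy; apply/asboolP; exists r, (z + y).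
by split; [exact: IH | rewrite addrA].
Qed.

Definition noeth := forall L : pred R^o, is_submod L ->
  exists s : seq R^o, all L s /\ incl L (lspan s).

Section Lift.
Variables (M : lmodType R) (N : pred M).
Definition liftS (v : M) : subL N :=
  match pselect (genmod N v) with left h => exist _ v h | right _ => 0 end.
Lemma liftSE v : genmod N v -> sval (liftS v) = v.
Proof. by rewrite /liftS; case: pselect. Qed.
End Lift.

Lemma fg_of_span (M : lmodType R) (N : pred M) (s : seq M) :
  is_submod N -> all N s -> incl N (lspan s) -> fg (subL N).
Proof.
move=> HN Ns Nsp; apply/fgE; exists (map (liftS N) s) => u.
have Nu : N (sval u) by rewrite -(genmodE _ HN); exact: (svalP u).
have -> : u = liftS N (sval u) by apply: subT_inj; rewrite liftSE // genmodE.
have : lspan s (sval u) by apply: Nsp.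
have : incl (lspan s) N by apply: lspan_in.
elim: s Ns {Nsp} (sval u) Nu => [|m s IH] /= Ns v Nv spN.
  move/eqP => v0; apply/eqP; apply: subT_inj; rewrite liftSE ?genmodE // v0.
case/andP: Ns => Nm Ns.
case/asboolP => r [y [Hy ev]].
have Ny : N y by apply: (lspan_in HN Ns).
apply/asboolP; exists r, (liftS N y); split.
  apply: IH => //; exact: lspan_in.
apply: subT_inj => /=; rewrite !liftSE ?genmodE //.
Qed.

Lemma fg_sub_of_noeth (M : lmodType R) (N : pred M) :
  noeth -> fg M -> is_submod N -> fg (subL N).
Proof.
move=> HR /fgE [g Hg] HN.
suff [s [Ns Nsp]] : exists s, all N s /\ incl N (lspan s) by apply: fg_of_span Ns Nsp.
have : incl N (lspan g) by move=> x _; apply: Hg.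
elim: g {Hg} N HN => [|m g IH] N HN Ng.
  by exists [::]; split => // x /Ng.
pose Ir := fun r : R^o => `[< exists y, lspan g y /\ N ((r : R) *: m + y) >].
have HIr : is_submod Ir.
  split.
  - apply/asboolP; exists 0; rewrite scale0r addr0; split; last exact: sm0.
    exact: (sm0 (lspan_submod g)).
  - move=> a b /asboolP [y1 [H1 N1]] /asboolP [y2 [H2 N2]]; apply/asboolP.
    exists (y1 + y2); split; first exact: (smD (lspan_submod g)).
    by have := smD HN N1 N2; rewrite scalerDl addrACA.
  - move=> c a /asboolP [y1 [H1 N1]]; apply/asboolP; exists (c *: y1).
    split; first exact: (smZ (lspan_submod g)).
    by have := smZ HN c N1; rewrite scalerDr scalerA.
have [rs [Irs Irsp]] := HR _ HIr.
pose wit := fun r : R^o => match pselect (exists y, lspan g y /\ N ((r : R) *: m + y)) with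
  | left h => sval (cid h) | right _ => 0 end.
have witP : forall r, Ir r -> lspan g (wit r) /\ N ((r : R) *: m + wit r).
  move=> r /asboolP h; rewrite /wit; case: pselect => [h'|//].
  exact: (svalP (cid h')).
pose phi := fun r : R^o => (r : R) *: m + wit r.
pose N' := fun x => N x && lspan g x.
have HN' : is_submod N'.
  split; rewrite /N'.
  - by rewrite (sm0 HN) (sm0 (lspan_submod g)).
  - by move=> x y /andP [a1 b1] /andP [a2 b2]; rewrite (smD HN) // (smD (lspan_submod g)).
  - by move=> c x /andP [a1 b1]; rewrite (smZ HN c) // (smZ (lspan_submod g) c).
have Nsub : incl N' (lspan g) by move=> x /andP [].
have [t [Nt Ntsp]] := IH N' HN' Nsub.
have key : forall r : R^o, lspan rs r ->
    exists y', lspan g y' /\ lspan (map phi rs) ((r : R) *: m + y').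
  elim: rs Irs {Irsp} => [|r1 rs' IHr] /= Irs r.
    move/eqP => ->; exists 0; split; first exact: (sm0 (lspan_submod g)).
    by rewrite scale0r addr0.
  case/andP: Irs => Ir1 Irs; case/asboolP => c [r' [Hr' ->]].
  have [y'' [Hy'' Hsp]] := IHr Irs r' Hr'.
  have [w1 _] := witP _ Ir1.
  exists (c *: wit r1 + y''); split; first by apply: (smD (lspan_submod g)) => //; apply: (smZ (lspan_submod g)).
  apply/asboolP; exists c, ((r' : R) *: m + y''); split => //.
  rewrite /phi scalerDl scalerDr.
  have -> : (((c *: r1 : R^o) : R) *: m) = c *: ((r1 : R) *: m) by rewrite scalerA.
  by rewrite addrACA.
exists (t ++ map phi rs); split.
  rewrite all_cat; apply/andP; split.
    by apply/allP => z /(allP Nt) /andP [].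
  by rewrite all_map; apply/allP => r1 /(allP Irs) /witP [].
move=> x Nx; have := Ng x Nx => /= /asboolP [r [y [Hy ex]]].
have Irr : Ir r by apply/asboolP; exists y; rewrite -ex.
have [y' [Hy' Hsp]] := key r (Irsp r Irr).
have Nphi : incl (lspan (map phi rs)) N.
  apply: lspan_in => //; rewrite all_map; apply/allP => r1 /(allP Irs) /witP [].
  by [].
have Nd : N' (y - y').
  apply/andP; split; last by apply: (smB (lspan_submod g)).
  have -> : y - y' = x - ((r : R) *: m + y') by rewrite ex opprD addrACA subrr add0r.
  by apply: (smB HN) => //; apply: Nphi.
have -> : x = (y - y') + ((r : R) *: m + y') by rewrite ex addrCA subrK.
by apply: lspan_cat => //; apply: Ntsp.
Qed.
End P1a.

Section P1b.
Variable R : pzRingType.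
Notation LI L := (@is_submod R R^o L).

Lemma scO (a x : R^o) : a *: x = (a : R) * (x : R). Proof. by []. Qed.

Lemma lid0 (L : pred R^o) : LI L -> L 0. Proof. exact: sm0. Qed.
Lemma lidD (L : pred R^o) x y : LI L -> L x -> L y -> L (x + y). Proof. by move=> H; apply: smD. Qed.
Lemma lidM (L : pred R^o) a x : LI L -> L x -> L (a * x). Proof. by move=> H; apply: (smZ H). Qed.
Lemma lidN (L : pred R^o) x : LI L -> L x -> L (- x). Proof. by move=> H; apply: smN. Qed.
Lemma lidB (L : pred R^o) x y : LI L -> L x -> L y -> L (x - y). Proof. by move=> H; apply: smB. Qed.

Lemma chain_submod (X : lmodType R) (C : pred X -> Prop) :
  (exists Q, C Q) -> (forall Q, C Q -> is_submod Q) ->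
  (forall Q1 Q2, C Q1 -> C Q2 -> (forall x, Q1 x -> Q2 x) \/ (forall x, Q2 x -> Q1 x)) ->
  is_submod (fun x => `[< exists Q, C Q /\ Q x >]).
Proof.
move=> [Q1 CQ1] Cs Ctot; split.
- by apply/asboolP; exists Q1; split => //; apply: sm0 (Cs _ CQ1).
- move=> a b /asboolP [Qa [CQa Qaa]] /asboolP [Qb [CQb Qbb]].
  case: (Ctot _ _ CQa CQb) => hh.
    by apply/asboolP; exists Qb; split => //; apply: (smD (Cs _ CQb)) => //; apply: hh.
  by apply/asboolP; exists Qa; split => //; apply: (smD (Cs _ CQa)) => //; apply: hh.
- move=> r a /asboolP [Qa [CQa Qaa]]; apply/asboolP; exists Qa; split => //.
  exact: (smZ (Cs _ CQa)).
Qed.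

Hypothesis HR : left_artinian R.

Lemma dcc_min (Phi : pred R^o -> Prop) :
  (forall L, Phi L -> LI L) -> (exists L, Phi L) ->
  exists L0, Phi L0 /\ forall L, Phi L -> incl L L0 -> incl L0 L.
Proof.
move=> PhiL [L1 PL1]; apply/not_existsP => H.
have nx : forall L0 : {L | Phi L}, exists L : {L | Phi L},
    incl (sval L) (sval L0) /\ ~ incl (sval L0) (sval L).
  move=> [L0 P0]; have := H L0; move/not_andP => [//|].
  move/existsNP => [L /not_implyP [PL /not_implyP [iL niL]]].
  by exists (exist _ L PL).
pose next := fun L0 => sval (cid (nx L0)).
pose I := fun n => sval (iter n next (exist _ L1 PL1)).
have [n Hn] : exists n, forall m, (n <= m)%N -> forall x, I m x = I n x.
  apply: HR; first by move=> n; apply: PhiL; exact: (svalP (iter n next _)).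
  move=> n x; rewrite /I /= => Ix.
  exact: (proj1 (svalP (cid (nx (iter n next (exist _ L1 PL1)))))).
apply: (proj2 (svalP (cid (nx (iter n next (exist _ L1 PL1)))))) => x Ix.
by have := Hn n.+1 (leqnSn n) x; rewrite /I /= => ->.
Qed.

Definition maxL (m : pred R^o) :=
  [/\ LI m, ~~ m 1 & forall L, LI L -> incl m L -> ~~ L 1 -> incl L m].

Lemma exists_max (L : pred R^o) : LI L -> ~~ L 1 -> exists m, maxL m /\ incl L m.
Proof.
move=> HL nL1.
have [m [[Hm nm1] Lm mmax]] := @zorn_pred R R^o (fun Q => LI Q /\ ~~ Q 1) L (conj HL nL1)
  (fun C CQ CPhi Ctot => conj (chain_submod CQ (fun Q h => proj1 (CPhi Q h)) Ctot)
     (introN (asboolP _) (fun '(ex_intro Q (conj h1 h2)) => elimN idP (proj2 (CPhi Q h1)) h2))).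
exists m; split => //; split => // L' HL' mL' nL'; exact: mmax.
Qed.

Definition interL (ms : seq (pred R^o)) : pred R^o := fun r => all (fun m : pred R^o => m r) ms.
Fixpoint allmax (ms : seq (pred R^o)) : Prop :=
  match ms with [::] => True | m :: ms' => maxL m /\ allmax ms' end.

Lemma interL_LI ms : allmax ms -> LI (interL ms).
Proof.
elim: ms => [|m ms IH] /=; first by split.
case=> [[Hm _ _] /IH Hi]; split.
- by apply/andP; split; [exact: (sm0 Hm) | exact: (sm0 Hi)].
- by move=> x y /andP [a b] /andP [c d]; apply/andP; split; [exact: (smD Hm) | exact: (smD Hi)].
- by move=> a x /andP [c d]; apply/andP; split; [exact: (smZ Hm) | exact: (smZ Hi)].
Qed.

Lemma colon_max m r : maxL m ->
  (forall x, m (x * r)) \/ maxL (fun x : R^o => m ((x : R) * r)).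
Proof.
move=> [Hm nm1 mmax].
have HK : LI (fun x : R^o => m ((x : R) * r)).
  split => /=; first by rewrite mul0r (sm0 Hm).
  - by move=> x y a b; rewrite mulrDl (smD Hm).
  - by move=> a x h; rewrite -mulrA; apply: (lidM _ Hm).
case: (boolP (m r)) => mr.
  by left => x; apply: (lidM _ Hm).
right; split => //; first by rewrite mul1r.
move=> L HL KL nL1 l Ll; apply/negPn/negP => nKl.
pose T := fun y : R^o => `[< exists a q, L a /\ m q /\ y = (a : R) * r + q >].
have HT : LI T.
  split.
  - by apply/asboolP; exists 0, 0; rewrite mul0r addr0; split; [apply: sm0|split => //; apply: sm0].
  - move=> x y /asboolP [a1 [q1 [L1 [m1 ->]]]] /asboolP [a2 [q2 [L2 [m2 ->]]]].
    apply/asboolP; exists (a1 + a2), (q1 + q2); rewrite mulrDl addrACA.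
    by split; [apply: (smD HL) | split => //; apply: (smD Hm)].
  - move=> c x /asboolP [a1 [q1 [L1 [m1 ->]]]]; apply/asboolP; exists (c * a1), (c * q1).
    by rewrite scO mulrDr mulrA; split; [apply: (lidM _ HL) | split => //; apply: (lidM _ Hm)].
have mT : incl m T by move=> q mq; apply/asboolP; exists 0, q; rewrite mul0r add0r; split => //; apply: sm0.
have T1 : T 1.
  apply/negPn/negP => nT1; have := mmax T HT mT nT1 (l * r).
  have -> : T (l * r) by apply/asboolP; exists l, 0; rewrite addr0; split => //; split => //; apply: sm0.
  by move=> /(_ isT) h; rewrite h in nKl.
have : T (r * 1) by apply: (lidM _ HT).
rewrite mulr1 => /asboolP [a [q [La [mq e1]]]].
have : L (1 - a) by apply: KL; rewrite /= mulrBl mul1r {1}e1 addrC addKr.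
move=> h; have := smD HL h La; rewrite subrK => L1.
by rewrite L1 in nL1.
Qed.

Lemma J_exists : exists J : pred R^o,
  [/\ LI J, (exists2 ms, allmax ms & J = interL ms) & forall m, maxL m -> incl J m].
Proof.
have [J [[ms [Hms eJ]] Jmin]] := @dcc_min (fun L => exists ms, allmax ms /\ L = interL ms)
  (fun L '(ex_intro ms (conj h e)) => ltac:(rewrite e; exact: interL_LI h))
  (ex_intro _ (interL [::]) (ex_intro _ [::] (conj I erefl))).
exists J; split; first by rewrite eJ; apply: interL_LI.
  by exists ms.
move=> m mm x Jx.
have hm := Jmin (interL (m :: ms)) (ex_intro _ (m :: ms) (conj (conj mm Hms) erefl)).
have sub : incl (interL (m :: ms)) J by move=> y /andP [_]; rewrite eJ.
by have /andP [] := hm sub x Jx.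
Qed.

Definition simple_rel (B S : pred R^o) :=
  [/\ LI S, incl B S, (exists s, S s /\ ~~ B s) &
      forall S', LI S' -> incl B S' -> incl S' S -> incl S' B \/ incl S S'].

Definition SSp (B : pred R^o) : pred R^o :=
  genmod (fun z : R^o => B z || `[< exists S, simple_rel B S /\ S z >]).

Lemma simple_of_max m (B : pred R^o) (w : R^o) : maxL m -> LI B ->
  (forall r, m r -> B ((r : R) * w)) -> ~~ B w -> simple_rel B (plusR B w).
Proof.
move=> [Hm nm1 mmax] HB Hw nBw; split.
- exact: plusR_submod.
- by move=> z; apply: plusR_l.
- by exists w; split => //; apply: plusR_r.
move=> S' HS' BS' S'S.
case: (pselect (incl S' B)) => [h|h]; first by left.
right; move/existsNP: h => [s' /not_implyP [S's' nBs']].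
case/asboolP: (S'S _ S's') => b [r [Bb es']].
have nBrw : ~~ B ((r : R) * w).
  apply/negP => Brw; apply/negP: nBs'; rewrite es'; by have := smD HB Bb Brw.
have nmr : ~~ m r by apply/negP => mr; rewrite (Hw _ mr) in nBrw.
have HU := @plusR_submod R R^o m r Hm.
have U1 : plusR m r 1.
  apply/negPn/negP => nU1.
  have mU : incl m (plusR m r) by move=> z; apply: plusR_l.
  have := mmax _ HU mU nU1 r (@plusR_r R R^o m r Hm).
  by move=> h; rewrite h in nmr.
case/asboolP: U1 => q [t [mq e1]].
have S'w : S' w.
  have -> : w = (q : R) * w + (t : R) * ((r : R) * w).
    have e1' : (1 : R) = (q : R) + (t : R) * r := e1.
    by rewrite mulrA -mulrDl -e1' mul1r.
  apply: (smD HS'); first by apply: BS'; apply: Hw.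
  apply: (lidM _ HS'); have -> : (r : R) * w = s' - b by rewrite es' addrC addKr.
  by apply: (smB HS') => //; apply: BS'.
move=> z /asboolP [b1 [r1 [Bb1 ->]]]; apply: (smD HS'); first exact: BS'.
exact: (lidM _ HS').
Qed.

Lemma ssp (B : pred R^o) : LI B -> forall ms', allmax ms' ->
  forall v : R^o, (forall r, interL ms' r -> B ((r : R) * v)) -> SSp B v.
Proof.
move=> HB; elim=> [|m ms' IH] /=.
  by move=> _ v hv; apply: genmod_id; have := hv 1 isT; rewrite mul1r => ->.
move=> [mm hms] v hv.
have HSS : is_submod (SSp B) by apply: genmod_submod.
have Hi := interL_LI hms.
case: (mm) => Hm nm1 mmax.
pose T := fun z : R^o => `[< exists a q, interL ms' a /\ m q /\ z = a + q >].
have HT : LI T.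
  split.
  - by apply/asboolP; exists 0, 0; rewrite addr0; split; [exact: (sm0 Hi) | split => //; exact: (sm0 Hm)].
  - move=> x y /asboolP [a1 [q1 [A1 [M1 ->]]]] /asboolP [a2 [q2 [A2 [M2 ->]]]].
    apply/asboolP; exists (a1 + a2), (q1 + q2); rewrite addrACA.
    by split; [apply: (smD Hi) | split => //; apply: (smD Hm)].
  - move=> c x /asboolP [a1 [q1 [A1 [M1 ->]]]]; apply/asboolP; exists (c *: a1), (c *: q1).
    by rewrite scalerDr; split; [apply: (smZ Hi) | split => //; apply: (smZ Hm)].
have mT : incl m T.
  by move=> q mq; apply/asboolP; exists 0, q; rewrite add0r; split => //; exact: (sm0 Hi).
case: (boolP (T 1)) => [/asboolP [e [f [ie [mf e1]]]] | nT1]; last first.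
  apply: IH => // r ir; apply: hv; rewrite /interL /=; apply/andP; split => //.
  apply: (mmax _ HT mT nT1); apply/asboolP; exists r, 0; rewrite addr0.
  by split => //; split => //; exact: (sm0 Hm).
have e1' : (1 : R) = (e : R) + (f : R) := e1.
have -> : v = (e : R) * v + (f : R) * v by rewrite -mulrDl -e1' mul1r.
apply: (smD HSS).
  case: (boolP (B ((e : R) * v))) => [Bev|nBev].
    by apply: genmod_id; rewrite /= Bev.
  apply: genmod_id; apply/orP; right; apply/asboolP.
  exists (plusR B ((e : R) * v)); split; last exact: plusR_r.
  apply: simple_of_max mm HB _ nBev => r mr; rewrite mulrA; apply: hv.
  rewrite /interL /=; apply/andP; split; last exact: (lidM _ Hi).
  have -> : (r : R) * e = r - (r : R) * f.
    have ee : (e : R) = 1 - f by rewrite e1' addrK.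
    by rewrite ee mulrBr mulr1.
  by apply: (smB Hm) => //; apply: (lidM _ Hm).
apply: IH => // r ir; rewrite mulrA; apply: hv; rewrite /interL /=; apply/andP; split.
  exact: (lidM _ Hm).
have -> : (r : R) * f = r - (r : R) * e.
  have ff : (f : R) = 1 - e by rewrite e1' (addrC e f) addrK.
  by rewrite ff mulrBr mulr1.
by apply: (smB Hi) => //; apply: (lidM _ Hi).
Qed.

Section WithJ.
Variables (J : pred R^o) (ms : seq (pred R^o)).
Hypotheses (HJ : LI J) (Hms : allmax ms) (eJ : J = interL ms)
  (Jmax : forall m, maxL m -> incl J m).

Lemma Jright j r : J j -> J (j * r).
Proof.
move=> Jj.
have hm : forall m, maxL m -> m (j * r).
  move=> m mm; case: (colon_max r mm) => [h|h]; first exact: h.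
  exact: (Jmax h Jj).
rewrite eJ; elim: (ms) Hms => [//|m ms' IH] /= [mm hms].
by rewrite /interL /= hm //; apply: IH.
Qed.

Lemma Junit b : J b -> exists u, u * (1 - b) = 1.
Proof.
move=> Jb.
pose L := fun y : R^o => `[< exists u, y = u * (1 - b) >].
have HL : LI L.
  split.
  - by apply/asboolP; exists 0; rewrite mul0r.
  - by move=> x y /asboolP [u1 ->] /asboolP [u2 ->]; apply/asboolP; exists (u1 + u2); rewrite mulrDl.
  - by move=> a x /asboolP [u1 ->]; apply/asboolP; exists (a * u1); rewrite scO mulrA.
case: (boolP (L 1)) => [/asboolP [u e]|nL1]; first by exists u; rewrite -e.
have [m [mm Lm]] := exists_max HL nL1; case: (mm) => Hm nm1 _.
have mb : m b by apply: (Jmax mm).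
have m1b : m (1 - b) by apply: Lm; apply/asboolP; exists 1; rewrite mul1r.
by have := smD Hm m1b mb; rewrite subrK => h; rewrite h in nm1.
Qed.

Fixpoint Pw (k : nat) : pred R^o :=
  match k with
  | 0 => predT
  | k'.+1 => genmod (fun z : R^o => `[< exists j p, J j /\ Pw k' p /\ z = (j : R) * p >])
  end.

Lemma Pw_LI k : LI (Pw k).
Proof. by case: k => [|k] /=; [split | exact: genmod_submod]. Qed.

Lemma Pw_gen k j p : J j -> Pw k p -> Pw k.+1 (j * p).
Proof. by move=> Jj Pp; apply: genmod_id; apply/asboolP; exists j, p. Qed.

Lemma Pw_dec k : incl (Pw k.+1) (Pw k).
Proof.
apply: genmod_min; first exact: Pw_LI.
by move=> z /asboolP [j [p [Jj [Pp ->]]]]; apply: (lidM _ (Pw_LI k)).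
Qed.

Lemma Pw_decn k n : (k <= n)%N -> incl (Pw n) (Pw k).
Proof.
move=> /subnK <-; elim: (n - k)%N => [//|d IH] x /= h.
by apply: IH; apply: Pw_dec.
Qed.

Lemma Pw1 : incl (Pw 1) J.
Proof.
apply: genmod_min => // z /asboolP [j [p [Jj [_ ->]]]]; exact: Jright.
Qed.

Definition prodS (A B : pred R^o) : pred R^o :=
  genmod (fun z : R^o => `[< exists p q, A p /\ B q /\ z = (p : R) * q >]).

Lemma Pw_mul a b : incl (Pw (a + b)) (prodS (Pw a) (Pw b)).
Proof.
elim: a b => [|a IH] b.
  by move=> z Pz; apply: genmod_id; apply/asboolP; exists 1, z; rewrite mul1r.
change (incl (Pw (a + b).+1) (prodS (Pw a.+1) (Pw b))).
apply: genmod_min; first exact: genmod_submod.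
move=> z /asboolP [j [p [Jj [Pp ->]]]].
pose T := fun y : R^o => `[< forall j', J j' -> prodS (Pw a.+1) (Pw b) ((j' : R) * y) >].
have HT : LI T.
  split.
  - by apply/asboolP => j' _; rewrite mulr0; apply: (sm0 (genmod_submod _)).
  - move=> x y /asboolP hx /asboolP hy; apply/asboolP => j' Jj'; rewrite mulrDr.
    by apply: (smD (genmod_submod _)); [apply: hx | apply: hy].
  - move=> c x /asboolP hx; apply/asboolP => j' Jj'; rewrite scO mulrA.
    by apply: hx; apply: Jright.
have : T p.
  apply: (genmod_min HT) (IH b p Pp).
  move=> y /asboolP [p1 [q1 [P1 [Q1 ->]]]]; apply/asboolP => j' Jj'.
  by rewrite mulrA; apply: genmod_id; apply/asboolP; exists (j' * p1), q1; split => //; apply: Pw_gen.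
by move/asboolP; apply.
Qed.

Lemma Pw_nil : exists k, forall x, Pw k x -> x = 0.
Proof.
have [n0 Hn] : exists n, forall m, (n <= m)%N -> forall x, Pw m.+1 x = Pw n.+1 x.
  apply: HR; first by move=> n; apply: Pw_LI.
  by move=> n; apply: Pw_dec.
set k := n0.+1.
have Pkk : incl (Pw k) (prodS (Pw k) (Pw k)).
  move=> x Px; apply: Pw_mul.
  have -> : (k + k = (n0 + k).+1)%N by rewrite addSn.
  by rewrite Hn // leq_addr.
have PkJ : incl (Pw k) J by move=> x /(Pw_decn (leq0n n0 : (1 <= k)%N)); apply: Pw1.
exists k => a0 Pa0; apply/eqP/negPn/negP => na0.
pose Phi := fun L : pred R^o => LI L /\ exists a y, [/\ Pw k a, L y & (a : R) * y != 0].
have [L0 [[HL0 [a [x [Pa L0x ax]]]] L0min]] : exists L0, Phi L0 /\ forall L, Phi L -> incl L L0 -> incl L0 L.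
  apply: dcc_min; first by move=> L [].
  by exists predT; split; [split | exists a0, 1; rewrite mulr1].
pose Lx := fun z : R^o => `[< exists b, Pw k b /\ z = (b : R) * x >].
have HLx : LI Lx.
  split.
  - by apply/asboolP; exists 0; rewrite mul0r; split => //; apply: (sm0 (Pw_LI k)).
  - move=> y z /asboolP [b1 [P1 ->]] /asboolP [b2 [P2 ->]]; apply/asboolP.
    by exists (b1 + b2); rewrite mulrDl; split => //; apply: (smD (Pw_LI k)).
  - move=> c y /asboolP [b1 [P1 ->]]; apply/asboolP; exists (c * b1).
    by rewrite scO mulrA; split => //; apply: (lidM _ (Pw_LI k)).
have LxL0 : incl Lx L0 by move=> z /asboolP [b [_ ->]]; apply: (lidM _ HL0).
have PhiLx : Phi Lx.
  split => //; apply/not_existsP => Hno.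
  have Hz : forall c b, Pw k c -> Pw k b -> (c : R) * (b * x) = 0.
    move=> c b Pc Pb; apply/eqP/negPn/negP => nz; apply: (Hno c); exists (b * x).
    by split => //; apply/asboolP; exists b.
  pose T := fun z : R^o => (z : R) * x == 0.
  have HT : LI T.
    split; rewrite /T.
    - by rewrite mul0r.
    - by move=> y z /eqP h1 /eqP h2; rewrite mulrDl h1 h2 addr0.
    - by move=> c y /eqP h; rewrite scO -mulrA h mulr0.
  have : T a.
    apply: (genmod_min HT) (Pkk _ Pa) => z /asboolP [p [q [Pp [Pq ->]]]].
    by rewrite /T -mulrA Hz.
  by rewrite /T (negbTE ax).
have := L0min _ PhiLx LxL0 x L0x => /asboolP [b [Pb ex]].
have [u eu] := Junit (PkJ _ Pb).
have x0 : x = 0.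
  by rewrite -[x]mul1r -eu -mulrA mulrBl mul1r -ex subrr mulr0.
by move: ax; rewrite x0 mulr0 eqxx.
Qed.

Definition plusL (B : pred R^o) (s : seq R^o) : pred R^o :=
  fun z => `[< exists b y, B b /\ lspan s y /\ z = b + y >].

Lemma layer (B A : pred R^o) : LI B -> LI A -> incl B A ->
  (forall j a, J j -> A a -> B ((j : R) * a)) ->
  exists s, all A s /\ incl A (plusL B s).
Proof.
move=> HB HA BA JAB.
pose Phi := fun C : pred R^o => [/\ LI C, incl B C, incl C A &
   exists s, all A s /\ incl A (plusL C s)].
have [C0 [[HC0 BC0 C0A [s0 [As0 Asp0]]] C0min]] :
    exists C0, Phi C0 /\ forall L, Phi L -> incl L C0 -> incl C0 L.
  apply: dcc_min; first by move=> L [].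
  exists A; split => //; exists [::]; split => // a Aa; apply/asboolP; exists a, 0.
  by split => //; split; [rewrite /= eqxx | rewrite addr0].
case: (pselect (incl C0 B)) => [C0B|].
  exists s0; split => // a /Asp0 /asboolP [b [y [Cb [sy ->]]]].
  by apply/asboolP; exists b, y; split => //; apply: C0B.
move/existsNP => [c /not_implyP [C0c /negP nBc]].
have [D [[HD BD nDc] _ Dmax]] : exists D, [/\ [/\ LI D, incl B D & ~~ D c], (forall x, B x -> D x) &
     forall Q', [/\ LI Q', incl B Q' & ~~ Q' c] -> (forall x, D x -> Q' x) -> forall x, Q' x -> D x].
  apply: zorn_pred; first by split.
  move=> C CQ CPhi Ctot; split.
  - by apply: chain_submod => // Q /CPhi [].
  - case: CQ => Q CQ x Bx; apply/asboolP; exists Q; split => //.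
    by case: (CPhi _ CQ) => _ h _; apply: h.
  - by apply/negP => /asboolP [Q [CQ1 Qc]]; case: (CPhi _ CQ1) => _ _ /negP.
have HDc := @plusR_submod R R^o D c HD.
have Hss : incl (SSp B) (plusR D c).
  apply: genmod_min => // z /orP [Bz|/asboolP [S [[HS BS [s1 [Ss1 nBs1]] Ssimp] Sz]]].
    by apply: plusR_l; apply: BD.
  have HSD : LI (predI S D).
    split; rewrite /=.
    - by rewrite (sm0 HS) (sm0 HD).
    - by move=> x y /andP [a b] /andP [a' b']; rewrite (smD HS) // (smD HD).
    - by move=> a x /andP [a' b']; rewrite (smZ HS) // (smZ HD).
  case: (Ssimp _ HSD) => [x Bx|x /andP [] //|SDB|SSD]; first by rewrite /= (BS _ Bx) (BD _ Bx).
    pose DS := fun y : R^o => `[< exists d k, D d /\ S k /\ y = d + k >].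
    have HDS : LI DS.
      split.
      + by apply/asboolP; exists 0, 0; rewrite addr0; split; [exact: (sm0 HD) | split => //; exact: (sm0 HS)].
      + move=> x y /asboolP [d1 [k1 [D1 [S1 ->]]]] /asboolP [d2 [k2 [D2 [S2 ->]]]].
        apply/asboolP; exists (d1 + d2), (k1 + k2); rewrite addrACA.
        by split; [apply: (smD HD) | split => //; apply: (smD HS)].
      + move=> a x /asboolP [d1 [k1 [D1 [S1 ->]]]]; apply/asboolP; exists (a *: d1), (a *: k1).
        by rewrite scalerDr; split; [apply: (smZ HD) | split => //; apply: (smZ HS)].
    have DDS : forall x, D x -> DS x.
      by move=> x Dx; apply/asboolP; exists x, 0; rewrite addr0; split => //; split => //; exact: (sm0 HS).
    case: (boolP (DS c)) => [/asboolP [d [k [Dd [Sk ec]]]]|nDSc]; last first.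
      have Ds1 : D s1.
        apply: (Dmax DS (And3 HDS (fun x Bx => DDS x (BD x Bx)) nDSc) DDS).
        by apply/asboolP; exists 0, s1; rewrite add0r; split => //; exact: (sm0 HD).
      by move: nBs1; rewrite (SDB s1) //= Ss1 Ds1.
    have nBk : ~~ B k.
      apply/negP => Bk; move: nDc; rewrite ec.
      by have := smD HD Dd (BD _ Bk) => ->.
    have HBk := @plusR_submod R R^o B k HB.
    have BBk : incl B (plusR B k) by move=> x; apply: plusR_l.
    have BkS : incl (plusR B k) S.
      move=> x /asboolP [b [r [Bb ->]]]; apply: (smD HS); first exact: BS.
      exact: (smZ HS).
    case: (Ssimp _ HBk BBk BkS) => [h|h].
      by move: nBk; rewrite (h k) //; apply: plusR_r.
    case/asboolP: (h _ Sz) => b [r [Bb ->]].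
    apply/asboolP; exists (b - r *: d), r; split.
      by apply: (smB HD) => //; [apply: BD | apply: (smZ HD)].
    have -> : k = c - d by rewrite ec addrC addKr.
    by rewrite scalerBr addrA addrAC.
  by apply: plusR_l; case/andP: (SSD _ Sz).
have AD : incl A (plusR D c).
  move=> a Aa; apply: Hss; apply: (ssp HB Hms) => r ir; apply: JAB => //.
  by rewrite eJ.
pose C1 := predI D C0.
have HC1 : LI C1.
  split; rewrite /C1 /=.
  - by rewrite (sm0 HD) (sm0 HC0).
  - by move=> x y /andP [a b] /andP [a' b']; rewrite (smD HD) // (smD HC0).
  - by move=> a x /andP [a' b']; rewrite (smZ HD) // (smZ HC0).
have PhiC1 : Phi C1.
  split => //.
  - by move=> x Bx; rewrite /C1 /= BD // BC0.
  - by move=> x /andP [_ /C0A].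
  exists (c :: s0); split; first by rewrite /= (C0A _ C0c).
  move=> a /Asp0 /asboolP [b0 [y [Cb0 [sy ->]]]].
  case/asboolP: (AD _ (C0A _ Cb0)) => d [r [Dd eb0]].
  apply/asboolP; exists d, (r *: c + y); split.
    rewrite /C1 /= Dd /=; have -> : d = b0 - r *: c by rewrite eb0 addrK.
    by apply: (smB HC0) => //; apply: (smZ HC0).
  split; last by rewrite eb0 addrA.
  by apply/asboolP; exists r, y.
have := C0min _ PhiC1 (fun x h => proj2 (andP h)) c C0c.
by case/andP => Dc; rewrite Dc in nDc.
Qed.


Lemma noeth_J : noeth R.
Proof.
move=> L HL.
have [k Hk] := Pw_nil.
pose Q i := exists s, all (predI L (Pw i)) s /\ incl (predI L (Pw i)) (lspan s).
have HLP : forall i, LI (predI L (Pw i)).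
  move=> i; have HP := Pw_LI i; split => /=.
  - by rewrite (sm0 HL) (sm0 HP).
  - by move=> x y /andP [a b] /andP [a' b']; rewrite (smD HL) // (smD HP).
  - by move=> a x /andP [a' b']; rewrite (smZ HL) // (smZ HP).
have Qk : Q k.
  by exists [::]; split => // x /andP [_ /Hk ->]; rewrite /= eqxx.
have Qstep : forall i, Q i.+1 -> Q i.
  move=> i [t [At Atsp]].
  have BA : incl (predI L (Pw i.+1)) (predI L (Pw i)).
    by move=> x /andP [Lx Px]; rewrite /= Lx /=; apply: Pw_dec.
  have JAB : forall j a, J j -> predI L (Pw i) a -> predI L (Pw i.+1) ((j : R) * a).
    move=> j a Jj /andP [La Pa]; rewrite /= (lidM _ HL) //=.
    exact: Pw_gen.
  have [s' [As' Asp']] := layer (HLP i.+1) (HLP i) BA JAB.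
  exists (t ++ s'); split.
    rewrite all_cat As' andbT; apply/allP => x /(allP At); exact: BA.
  move=> a /Asp' /asboolP [b [y [Bb [sy ->]]]].
  by apply: lspan_cat => //; apply: Atsp.
have Qd : forall d, Q (k - d)%N.
  elim=> [|d IH]; first by rewrite subn0.
  rewrite subnS; move: IH; case: (k - d)%N => [|kd] IH //=.
  exact: Qstep.
have := Qd k; rewrite subnn => -[s [As Asp]].
exists s; split.
  by apply/allP => x /(allP As) /andP [].
by move=> x Lx; apply: Asp; rewrite /= Lx.
Qed.

End WithJ.
Lemma noeth_art : noeth R.
Proof.
have [J [HJ [ms Hms eJ] Jmax]] := J_exists.
exact: (noeth_J HJ Hms eJ Jmax).
Qed.
End P1b.


Unset Implicit Arguments. Set Strict Implicit.

Theorem theorem2p6 (R : pzRingType) (alpha beta : forall M : lmodType R, pred M) :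
  left_artinian R ->
  preradical alpha -> preradical beta ->
  pr_idempotent alpha -> q_preserves_mono beta ->
  ((forall M : lmodType R, fg M -> leinf (ll_up alpha M) (ll_low_q beta M)) <->
   (forall M : lmodType R, in_T beta M -> in_F alpha M)).
Proof.
apply: (main_thm (fun M N HR fM HN => fg_sub_of_noeth (noeth_art HR) fM HN)).
Qed.
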